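(* Let $\underline{Q}$ be a lower transition rate operator. Then for any $t>0$, any $x\in\mathcal{X}$ and any $A\subseteq\mathcal{X}$: \begin{equation*} \underline{T}_t\mathbb{I}_{A}(x)>0 ~~\Leftrightarrow~~ A\text{ is lower reachable from }x. \end{equation*}
   Context: $\mathcal{X}$ is a finite state space and $\mathcal{L}(\mathcal{X})$ is the set of real-valued functions on $\mathcal{X}$; $\mathbb{I}_S$ denotes the indicator of $S\subseteq\mathcal{X}$ (and $\mathbb{I}_x\coloneqq\mathbb{I}_{\{x\}}$), and $\mathbb{N}_0\coloneqq\mathbb{N}\cup\{0\}$. A lower transition rate operator is a map $\underline{Q}\colon\mathcal{L}(\mathcal{X})\to\mathcal{L}(\mathcal{X})$ such that for all $f,g\in\mathcal{L}(\mathcal{X})$, $\lambda\geq0$, $\mu\in\mathbb{R}$ and $x,y\in\mathcal{X}$: $\underline{Q}(\mu)=0$; $\underline{Q}(f+g)\geq\underline{Q}(f)+\underline{Q}(g)$; $\underline{Q}(\lambda f)=\lambda\underline{Q}(f)$; and $x\neq y\Rightarrow\underline{Q}(\mathbb{I}_y)(x)\geq0$. For each $t\geq0$, $\underline{T}_t$ is defined for every $f$ by the (uniquely solvable) differential equation $\frac{d}{dt}\underline{T}_tf=\underline{Q}\,\underline{T}_tf$ for all $t\geq0$ with $\underline{T}_0f=f$. Lower reachability: $A$ is lower reachable from $x$ if $x\in A_n$, where $A_0\coloneqq A$, $A_{k+1}\coloneqq A_k\cup\{y\in\mathcal{X}\setminus A_k\colon\underline{Q}(\mathbb{I}_{A_k})(y)>0\}$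 for $k\in\mathbb{N}_0$, and $n$ is the first index with $A_n=A_{n+1}$. *)

(* Defs.v *)
From HB Require Import structures.
From mathcomp Require Import all_boot all_order all_algebra.
From mathcomp Require Import all_classical all_reals topology normedtype.
Set Implicit Arguments. Unset Strict Implicit. Unset Printing Implicit Defensive.
Import Order.TTheory GRing.Theory Num.Theory.
Import numFieldNormedType.Exports.
Local Open Scope ring_scope.
Local Open Scope classical_set_scope.

Section Defs.
Variables (R : realType) (X : finType).

Definition indic (A : {set X}) : X -> R := fun y => if y \in A then 1 else 0.

Definition lower_rate_op (Q : (X -> R) -> (X -> R)) : Prop :=
  [/\ (forall mu : R, Q (fun _ => mu) = (fun _ => 0)),
      (forall f g : X -> R, forall y, Q f y + Q g y <= Q (fun z => f z + g z) y),
      (forall (lam : R) (f : X -> R), 0 <= lam ->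
          Q (fun z => lam * f z) = (fun y => lam * Q f y)) &
      (forall x y : X, x != y -> 0 <= Q (indic [set y]) x)].

(* T (the family t |-> T_t) solves d/dt T_t f = Q (T_t f) for all t >= 0
   (one-sided derivative at t = 0, derivative taken componentwise, which
   is the same as in the finite-dimensional space L(X)), with T_0 f = f. *)
Definition solves_semigroup_ode (Q : (X -> R) -> (X -> R))
    (T : R -> (X -> R) -> (X -> R)) : Prop :=
  forall f : X -> R,
    T 0 f = f /\
    forall t : R, 0 <= t -> forall x : X,
      (fun h : R => h^-1 * (T (t + h) f x - T t f x))
        @ within (fun h : R => 0 <= t + h) (dnbhs (0 : R))
        --> Q (T t f) x.

Fixpoint reach_seq (Q : (X -> R) -> (X -> R)) (A : {set X}) (k : nat)
    : {set X} :=
  match k with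
  | 0 => A
  | k'.+1 => let Ak := reach_seq Q A k' in
             Ak :|: [set y | (y \notin Ak) && (0 < Q (indic Ak) y)]
  end.

Definition lower_reachable (Q : (X -> R) -> (X -> R)) (A : {set X}) (x : X)
    : Prop :=
  exists n : nat,
    [/\ reach_seq Q A n = reach_seq Q A n.+1,
        (forall m : nat, (m < n)%N -> reach_seq Q A m <> reach_seq Q A m.+1) &
        x \in reach_seq Q A n].

End Defs.

(* Main.v *)
Require Import Defs.
From HB Require Import structures.
From mathcomp Require Import all_boot all_order all_algebra.
From mathcomp Require Import all_classical all_reals topology normedtype.
From mathcomp Require Import derive sequences exp.
From mathcomp Require Import ring lra.
Import Order.TTheory GRing.Theory Num.Theory.
Import numFieldNormedType.Exports.
Local Open Scope ring_scope.
Local Open Scope classical_set_scope.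

Section QLemmas.
Variables (R : realType) (X : finType) (Q : (X -> R) -> (X -> R)).
Hypothesis HQ : lower_rate_op Q.

Lemma Q_cst (m : R) y : Q (fun _ => m) y = 0.
Proof. by case: HQ => H _ _ _; rewrite H. Qed.

Lemma Q_add f g y : Q f y + Q g y <= Q (fun z => f z + g z) y.
Proof. by case: HQ => _ H _ _; apply: H. Qed.

Lemma Q_scale (lam : R) f y : 0 <= lam -> Q (fun z => lam * f z) y = lam * Q f y.
Proof. by case: HQ => _ _ H _ hl; rewrite H. Qed.

Lemma Q_sum (I : Type) (r : seq I) (F : I -> X -> R) y :
  \sum_(i <- r) Q (F i) y <= Q (fun z => \sum_(i <- r) F i z) y.
Proof.
elim: r => [|a r IH].
  by rewrite big_nil (_ : (fun z => _) = (fun _ => 0)) ?Q_cst //;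
     apply: funext => z; rewrite big_nil.
rewrite big_cons (_ : (fun z => _) = (fun z => F a z + \sum_(i <- r) F i z)); last first.
  by apply: funext => z; rewrite big_cons.
by apply: le_trans (Q_add _ _ _); rewrite lerD2l.
Qed.

Lemma decomp (f : X -> R) : f = (fun z => \sum_(y : X) f y * indic R [set y]%SET z).
Proof.
apply: funext => z; rewrite (bigD1 z) //= /indic finset.in_set1 eqxx mulr1 big1 ?addr0 //.
by move=> y; rewrite finset.in_set1 eq_sym => /negbTE ->; rewrite mulr0.
Qed.

Lemma Q_nonneg (h : X -> R) y : (forall z, 0 <= h z) -> h y = 0 -> 0 <= Q h y.
Proof.
move=> h0 hy; rewrite [h]decomp; apply: le_trans (Q_sum _ _ _ _).
apply: sumr_ge0 => z _; rewrite Q_scale //.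
have [->|nzy] := eqVneq z y; first by rewrite hy mul0r.
case: HQ => _ _ _ H; apply: mulr_ge0 => //; apply: H; by rewrite eq_sym.
Qed.

Lemma Q_locmono (f g : X -> R) y : (forall z, f z <= g z) -> f y = g y -> Q f y <= Q g y.
Proof.
move=> fg fy.
rewrite (_ : g = (fun z => f z + (g z - f z))); last by apply: funext => z; rewrite addrC subrK.
apply: le_trans (Q_add _ _ _); rewrite lerDl; apply: Q_nonneg.
  by move=> z; rewrite subr_ge0.
by rewrite fy subrr.
Qed.

Lemma Q_shift (f : X -> R) m y : Q (fun z => f z + m) y = Q f y.
Proof.
apply/eqP; rewrite eq_le; apply/andP; split.
  have := Q_add (fun z => f z + m) (fun _ => - m) y.
  rewrite Q_cst addr0 (_ : (fun z => f z + m + - m) = f) //.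
  by apply: funext => z; rewrite addrK.
by have := Q_add f (fun _ => m) y; rewrite Q_cst addr0.
Qed.

End QLemmas.

Section MP.
Variable R : realType.

Lemma within_dnbhs0P (D G : R -> Prop) :
  (\forall h \near within D (dnbhs (0:R)), G h) ->
  exists2 e : R, 0 < e & forall h, `|h| < e -> h != 0 -> D h -> G h.
Proof.
rewrite near_withinE /dnbhs /= near_withinE.
move/nbhs_ballP => [e e0 He]; exists e => // h he hn Dh.
by apply: He => //; rewrite /ball /= sub0r normrN.
Qed.

Local Notation Fw t := (within (fun h : R => 0 <= t + h) (dnbhs (0:R))).

Lemma quot_lt (f : R -> R) t l b :
  (fun h => h^-1 * (f (t + h) - f t)) @ Fw t --> l -> l < b ->
  exists2 e : R, 0 < e & forall h, `|h| < e -> h != 0 -> 0 <= t + h ->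
     h^-1 * (f (t + h) - f t) < b.
Proof.
move=> H lb.
have [e e0 He] := @within_dnbhs0P _ _ (cvgr_lt l H b lb).
by exists e.
Qed.

Lemma quot_gt (f : R -> R) t l b :
  (fun h => h^-1 * (f (t + h) - f t)) @ Fw t --> l -> b < l ->
  exists2 e : R, 0 < e & forall h, `|h| < e -> h != 0 -> 0 <= t + h ->
     b < h^-1 * (f (t + h) - f t).
Proof.
move=> H lb.
have [e e0 He] := @within_dnbhs0P _ _ (cvgr_gt l H b lb).
by exists e.
Qed.

Lemma cont_bound (f : R -> R) t l :
  (fun h => h^-1 * (f (t + h) - f t)) @ Fw t --> l ->
  exists2 e : R, 0 < e & forall h, `|h| < e -> h != 0 -> 0 <= t + h ->
     `|f (t + h) - f t| <= `|h| * (`|l| + 1).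
Proof.
move=> H.
have lt1 : l < l + 1 by lra.
have lt2 : l - 1 < l by lra.
have [e1 e10 H1] := @quot_lt f t l (l + 1) H lt1.
have [e2 e20 H2] := @quot_gt f t l (l - 1) H lt2.
exists (Num.min e1 e2); first by rewrite lt_min e10 e20.
move=> h; rewrite lt_min => /andP[he1 he2] hn th.
have q1 := H1 h he1 hn th; have q2 := H2 h he2 hn th.
have E : f (t + h) - f t = h * (h^-1 * (f (t + h) - f t)).
  by rewrite mulrA mulfV ?mul1r.
rewrite E normrM ler_wpM2l //.
set q := h^-1 * _ in q1 q2 E *.
rewrite ler_norml; apply/andP; split.
  have : - `|l| <= l by rewrite lerNnormlW.
  lra.
have : l <= `|l| by rewrite ler_norm.
lra.
Qed.


Variable X : finType.

Lemma min_fin (P : X -> R -> Prop) :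
  (forall z, exists2 e : R, 0 < e & forall h, 0 < h -> h < e -> P z h) ->
  exists2 e : R, 0 < e & forall z h, 0 < h -> h < e -> P z h.
Proof.
move=> H.
suff /(_ (enum X)) [e e0 He] : forall s : seq X, exists2 e : R, 0 < e &
    forall z, z \in s -> forall h, 0 < h -> h < e -> P z h.
  by exists e => // z h; apply: He; rewrite mem_enum.
elim=> [|a s [e e0 He]]; first by exists 1.
have [ea ea0 Ha] := H a.
exists (Num.min ea e); first by rewrite lt_min ea0 e0.
move=> z; rewrite in_cons => /orP[/eqP ->|zs] h h0; rewrite lt_min => /andP[h1 h2].
  exact: Ha.
exact: He.
Qed.

Lemma MP (d D : R -> X -> R) (t0 : R) :
  0 <= t0 ->
  (forall z, d 0 z <= 0) ->
  (forall t, 0 <= t -> t <= t0 -> forall z,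
     (fun h => h^-1 * (d (t + h) z - d t z)) @ Fw t --> D t z) ->
  (forall t z, 0 <= t -> t < t0 -> 0 < d t z -> (forall z', d t z' <= d t z) ->
     D t z <= 0) ->
  forall z, d t0 z <= 0.
Proof.
move=> t00 d0 Hd HD.
suff good_t0 : forall eps, 0 < eps -> forall z, d t0 z <= eps * (1 + t0).
  move=> z; rewrite leNgt; apply/negP => dz.
  have p0 : 0 < 1 + t0 by lra.
  have e0 : 0 < d t0 z / (2 * (1 + t0)) by rewrite divr_gt0 // mulr_gt0.
  have := good_t0 _ e0 z.
  have -> : d t0 z / (2 * (1 + t0)) * (1 + t0) = d t0 z / 2.
    by field; rewrite gt_eqF.
  lra.
move=> eps eps0.
pose good u := forall z, d u z <= eps * (1 + u).
have rightstep : forall s, 0 <= s -> s < t0 -> good s ->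
    exists2 e : R, 0 < e & forall z h, 0 < h -> h < e ->
      d (s + h) z <= eps * (1 + (s + h)).
  move=> s s0 st gs; apply: min_fin => z.
  have Hz := Hd s s0 (ltW st) z.
  have [tight|slack] := eqVneq (d s z) (eps * (1 + s)).
  - have Dz : D s z <= 0.
      apply: HD => //; first by rewrite tight mulr_gt0 //; lra.
      by move=> z'; rewrite tight; apply: gs.
    have Dlt : D s z < eps by apply: le_lt_trans Dz eps0.
    have [e e0 He] := @quot_lt (d ^~ z) s (D s z) eps Hz Dlt.
    exists e => // h h0 he.
    have := He h _ _ _; rewrite gtr0_norm // => /(_ he (lt0r_neq0 h0)) /=.
    have sh : 0 <= s + h by lra.
    move=> /(_ sh).
    set q := h^-1 * _ => qlt.
    have E : d (s + h) z - d s z = h * q by rewrite /q mulrA mulfV ?mul1r // gt_eqF.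
    have : h * q < h * eps by rewrite ltr_pM2l.
    have -> : eps * (1 + (s + h)) = eps * (1 + s) + h * eps by ring.
    lra.
  - have lt : d s z < eps * (1 + s) by rewrite lt_neqAle slack gs.
    have [e e0 He] := @cont_bound (d ^~ z) s (D s z) Hz.
    set g := eps * (1 + s) - d s z.
    have g0 : 0 < g by rewrite /g; lra.
    have n0 : 0 < `|D s z| + 1 by rewrite ltr_wpDl.
    exists (Num.min e (g / (`|D s z| + 1))).
      by rewrite lt_min e0 divr_gt0.
    move=> h h0; rewrite lt_min => /andP[he hg].
    have sh : 0 <= s + h by lra.
    have := He h; rewrite gtr0_norm // => /(_ he (lt0r_neq0 h0) sh) /= Hb.
    have : h * (`|D s z| + 1) < g by rewrite -ltr_pdivlMr.
    move: Hb; rewrite ler_norml => /andP[_ Hb].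
    have : 0 <= eps * h by rewrite mulr_ge0 // ltW.
    have -> : eps * (1 + (s + h)) = eps * (1 + s) + eps * h by ring.
    rewrite /g in g0 *.
    lra.
have leftstep : forall s, 0 < s -> s <= t0 -> (forall u, 0 <= u -> u < s -> good u) ->
    good s.
  move=> s s0 st H z; rewrite leNgt; apply/negP => bad.
  have [e e0 He] := @cont_bound (d ^~ z) s (D s z) (Hd s (ltW s0) st z).
  set g := d s z - eps * (1 + s).
  have g0 : 0 < g by rewrite /g; lra.
  have n0 : 0 < `|D s z| + 1 by rewrite ltr_wpDl.
  set m := Num.min (Num.min e s) (g / (`|D s z| + 1)).
  have m0 : 0 < m by rewrite !lt_min e0 s0 divr_gt0.
  have me : m <= e by rewrite /m !ge_min lexx.
  have ms : m <= s by rewrite /m !ge_min lexx orbT.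
  have mg : m * (`|D s z| + 1) <= g.
    by rewrite -ler_pdivlMr // /m ge_min lexx orbT.
  have hn : - (m / 2) != 0 by rewrite oppr_eq0 gt_eqF // divr_gt0.
  have sh : 0 <= s + - (m / 2) by lra.
  have := He (- (m / 2)); rewrite normrN gtr0_norm ?divr_gt0 //.
  have m2 : m / 2 < e by lra.
  move=> /(_ m2 hn sh) /=; rewrite ler_norml => /andP[Hb _].
  have hs : s + - (m / 2) < s by lra.
  have := H _ sh hs z.
  have : (m / 2) * (`|D s z| + 1) <= m * (`|D s z| + 1).
    by rewrite ler_wpM2r ?ltW //; lra.
  have : 0 <= eps * (m / 2) by rewrite mulr_ge0 // ?ltW //; lra.
  have -> : eps * (1 + (s + - (m / 2))) = eps * (1 + s) - eps * (m / 2) by ring.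
  rewrite /g in g0 mg.
  lra.
have good0 : good 0 by move=> z; apply: le_trans (d0 z) _; rewrite mulr_ge0 //; lra.
pose S : set R := fun t => 0 <= t <= t0 /\ forall u, 0 <= u -> u <= t -> good u.
have S0 : S 0.
  split; first by rewrite lexx t00.
  by move=> u u0 u1; have -> : u = 0 by apply/eqP; rewrite eq_le u0 u1.
have hS : has_sup S.
  split; first by exists 0.
  by exists t0 => x [/andP[]].
have s1ub := sup_upper_bound hS.
have s1le : sup S <= t0 by apply: ge_sup; [exists 0 | move=> x [/andP[]]].
have s1ge : 0 <= sup S by apply: s1ub.
have below : forall u, 0 <= u -> u < sup S -> good u.
  move=> u u0 us.
  have p : 0 < sup S - u by lra.
  have [t [_ St] lt] := @sup_adherent _ S (sup S - u) p hS.
  by apply: St => //; lra.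
have gs1 : good (sup S).
  have [->|nz] := eqVneq (sup S) 0; first exact: good0.
  have p : 0 < sup S by rewrite lt_neqAle eq_sym nz.
  exact: (leftstep (sup S) p s1le below).
have [st|ts] := ltP (sup S) t0; last first.
  have -> : t0 = sup S by apply/eqP; rewrite eq_le s1le ts.
  exact: gs1.
have [e e0 He] := rightstep _ s1ge st gs1.
pose t' := Num.min (sup S + e / 2) t0.
have St' : S t'.
  split.
    apply/andP; split; last by rewrite /t' ge_min lexx orbT.
    by rewrite /t' le_min t00 andbT; lra.
  move=> u u0 ut z.
  have [us|su] := ltP u (sup S); first exact: below.
  have [eq|ne] := eqVneq u (sup S); first by rewrite eq; apply: gs1.
  have su' : sup S < u by rewrite lt_neqAle eq_sym ne su.
  have ue : u - sup S < e.
    have : u <= sup S + e / 2 by apply: le_trans ut _; rewrite /t' ge_min lexx.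
    lra.
  have := He z (u - sup S) _ ue; rewrite (_ : sup S + (u - sup S) = u); last by ring.
  by apply; lra.
have := s1ub _ St'.
have : sup S < t' by rewrite /t' lt_min st andbT; lra.
lra.
Qed.

End MP.

Section D.
Variable R : realType.
Lemma scale1_id (h : R) : h%:A = h.
Proof. by rewrite /GRing.scale/= mulr1. Qed.

Local Notation Fw t := (within (fun h : R => 0 <= t + h) (dnbhs (0:R))).
Lemma derive_quot (f : R -> R) (t df : R) : is_derive t 1 f df ->
  (fun h => h^-1 * (f (t + h) - f t)) @ Fw t --> df.
Proof.
case=> Hd Hv.
have E : (fun h : R => h^-1 * (f (t + h) - f t)) =
   (fun h => h^-1 *: ((f \o shift t) (h *: 1) - f t)).
  by apply: funext => h /=; rewrite /shift /= scale1_id [h + t]addrC.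
rewrite E -Hv.
apply: cvg_trans _ Hd.
apply: cvg_app; exact: cvg_within.
Qed.

Lemma is_derive_lin (d x : R) : is_derive x 1 (fun s : R => d * s) d.
Proof.
have := @is_deriveZ _ _ _ (@id R) d x 1 1 (is_derive_id x 1).
Time by rewrite /GRing.scale /= mulr1.
Time Qed.

Lemma is_derive_expRM (C t : R) : is_derive t 1 (fun s => expR (C * s)) (C * expR (C * t)).
Proof.
have dl : derivable (fun s : R => C * s) t 1 by case: (is_derive_lin C t).
have de : derivable (@expR R) (C * t) 1 by case: (is_derive_expR (C * t)).
have E : (fun s => expR (C * s)) = (@expR R) \o (fun s : R => C * s) by [].
rewrite E; apply: DeriveDef.
  Time apply/derivable1_diffP; apply: differentiable_comp; exact/derivable1_diffP.
Time rewrite -derive1E derive1_comp //.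
rewrite !derive1E.
have -> : 'D_1 (@expR R) (C * t) = expR (C * t) by case: (is_derive_expR (C * t)).
have -> : 'D_1 ( *%R C) t = C by case: (is_derive_lin C t).
by rewrite mulrC.
Time Qed.

Lemma is_derive_term (C d b t : R) (k : nat) :
  is_derive t 1 (fun s => b * (expR (C * s) * (d * s) ^+ k))
    (b * (C * expR (C * t) * (d * t) ^+ k +
          expR (C * t) * (k%:R * (d * t) ^+ k.-1 * d))).
Proof.
have h1 := is_derive_expRM C t.
have h2 := @is_deriveX _ _ (fun s : R => d * s) k t 1 d (is_derive_lin d t).
have h3 := @is_deriveM _ _ (fun s => expR (C * s)) ((fun s : R => d * s) ^+ k) t 1 _ _ h1 h2.
have h4 := @is_deriveZ _ _ _ _ b t 1 _ h3.
have E : (fun s => b * (expR (C * s) * (d * s) ^+ k)) =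
    b *: ((fun s => expR (C * s)) * (fun s : R => d * s) ^+ k).
  Time by apply: funext => s; rewrite scalrfctE mulrfctE exprfctE.
rewrite E; apply: is_derive_eq.
rewrite exprfctE /=.
rewrite /GRing.scale /=.
by ring.
Qed.

Lemma w_quot (N : nat) (C d t : R) (b : nat -> R) :
  (fun h => h^-1 * ((fun s => \sum_(k < N) b k * (expR (C * s) * (d * s) ^+ k)) (t + h)
     - (fun s => \sum_(k < N) b k * (expR (C * s) * (d * s) ^+ k)) t)) @ Fw t -->
  \sum_(k < N) b k * (C * expR (C * t) * (d * t) ^+ k +
          expR (C * t) * (k%:R * (d * t) ^+ k.-1 * d)).
Proof.
apply: derive_quot.
have := @is_derive_sum _ _ _ N (fun (i : 'I_N) s => b i * (expR (C * s) * (d * s) ^+ i)) t 1 _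
   (fun i => is_derive_term C d (b i) t i).
by rewrite fct_sumE.
Qed.

End D.

Section Reach.
Variables (R : realType) (X : finType) (Q : (X -> R) -> X -> R).
Hypothesis HQ : lower_rate_op Q.

Lemma reach_sub (A : {set X}) k : (reach_seq Q A k \subset reach_seq Q A k.+1)%SET.
Proof. exact: finset.subsetUl. Qed.

Lemma reach_mono (A : {set X}) j k : (j <= k)%N ->
  (reach_seq Q A j \subset reach_seq Q A k)%SET.
Proof.
elim: k => [|k IH]; first by rewrite leqn0 => /eqP ->.
rewrite leq_eqVlt => /orP[/eqP ->|]; first exact: subxx.
rewrite ltnS => /IH H; exact: fintype.subset_trans H (reach_sub _ _).
Qed.

Lemma reach_new (A : {set X}) k y : y \notin reach_seq Q A k ->
  y \in reach_seq Q A k.+1 -> 0 < Q (indic R (reach_seq Q A k)) y.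
Proof.
move=> yn; rewrite /= finset.in_setU (negbTE yn) /= finset.in_set.
by case/andP.
Qed.

Lemma reach_stab (A : {set X}) : exists n, reach_seq Q A n = reach_seq Q A n.+1.
Proof.
apply: contrapT => H.
have Hn : forall n, reach_seq Q A n != reach_seq Q A n.+1.
  by move=> n; apply/eqP => E; apply: H; exists n.
have card : forall k, (k <= #|reach_seq Q A k|)%N.
  elim=> [|k IH] //; apply: leq_trans (_ : #|reach_seq Q A k|.+1 <= _)%N => //.
  apply: proper_card; rewrite finset.properEneq reach_sub andbT; exact: Hn.
have := card #|X|.+1; rewrite ltnNge => /negP; apply.
exact: max_card.
Qed.

Lemma indic_le (A B : {set X}) z : (A \subset B)%SET -> indic R A z <= indic R B z.
Proof.
move=> /fintype.subsetP AB; rewrite /indic.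
case: ifP => zA; first by rewrite (AB _ zA).
by case: ifP.
Qed.

Lemma indic_ge0 (A : {set X}) z : 0 <= indic R A z.
Proof. by rewrite /indic; case: ifP. Qed.

Lemma Q_closed (B : {set X}) : (forall y, y \notin B -> ~ (0 < Q (indic R B) y)) ->
  forall z, Q (indic R B) z <= 0.
Proof.
move=> HB z.
have [zB|zn]:= boolP (z \in B); last by rewrite leNgt; apply/negP; apply: HB.
have := @Q_add R X Q HQ (indic R B) (indic R (~: B)%SET) z.
rewrite (_ : (fun y => _) = (fun _ => 1)); last first.
  by apply: funext => y; rewrite /indic finset.in_setC; case: (y \in B); rewrite ?addr0 ?add0r.
rewrite (@Q_cst R X Q HQ).
have : 0 <= Q (indic R (~: B)%SET) z.
  apply: (@Q_nonneg R X Q HQ) => //; first exact: indic_ge0.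
  by rewrite /indic finset.in_setC zB.
lra.
Qed.

End Reach.

Section Main.
Variables (R : realType) (X : finType) (Q : (X -> R) -> X -> R)
  (T : R -> (X -> R) -> X -> R).
Hypothesis HQ : lower_rate_op Q.
Hypothesis HT : solves_semigroup_ode Q T.

Lemma not_reach_zero (A : {set X}) n (t : R) x : 0 <= t ->
  reach_seq Q A n = reach_seq Q A n.+1 -> x \notin reach_seq Q A n ->
  T t (indic R A) x <= 0.
Proof.
move=> t0 Hfix xn.
set B := reach_seq Q A n.
have QB : forall z, Q (indic R B) z <= 0.
  apply: (@Q_closed R X Q HQ) => y yn Hy.
  move: yn; rewrite /B Hfix /= finset.in_setU negb_or => /andP[yn].
  by rewrite finset.in_set yn Hy.
have Hmp : T t (indic R A) x - indic R B x <= 0.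
  apply: (@MP R X (fun s z => T s (indic R A) z - indic R B z)
    (fun s z => Q (T s (indic R A)) z) t t0).
- move=> z /=; have [-> _] := HT (indic R A).
  rewrite subr_le0; apply: indic_le; exact: (@reach_mono R X Q A 0 n).
- move=> s s0 st z /=.
  have [_ Hd] := HT (indic R A).
  have E : (fun h => h^-1 * (T (s + h) (indic R A) z - indic R B z -
        (T s (indic R A) z - indic R B z))) =
      (fun h => h^-1 * (T (s + h) (indic R A) z - T s (indic R A) z)).
    by apply: funext => h; congr (_ * _); ring.
  by rewrite E; apply: Hd.
- move=> s z s0 st dpos dmax /=.
  set M := T s (indic R A) z - indic R B z.
  apply: le_trans (QB z).
  rewrite -(@Q_shift R X Q HQ (indic R B) M z).
  apply: (@Q_locmono R X Q HQ).
    by move=> y; have := dmax y; rewrite /M /=; lra.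
  by rewrite /M; ring.
have E : indic R B x = 0 by rewrite /indic (negbTE xn).
by move: Hmp; rewrite E subr0.
Qed.

End Main.

Section Fin.
Variable R : realType.

Lemma fin_lower (I : finType) (f : I -> R) : exists2 c, 0 <= c & forall i, - c <= f i.
Proof.
exists (\sum_i `|f i|); first by apply: sumr_ge0.
move=> i; rewrite (bigD1 i) //=.
have : 0 <= \sum_(j | j != i) `|f j| by apply: sumr_ge0.
have : - `|f i| <= f i by rewrite lerNnormlW.
lra.
Qed.

Lemma fin_pos (I : finType) (P : pred I) (f : I -> R) :
  (forall i, P i -> 0 < f i) -> exists2 d, 0 < d & forall i, P i -> d <= f i.
Proof.
move=> H.
suff /(_ (enum I)) [d d0 Hd] : forall s : seq I, exists2 d : R, 0 < d &
    forall i, i \in s -> P i -> d <= f i.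
  by exists d => // i; apply: Hd; rewrite mem_enum.
elim=> [|a s [d d0 Hd]]; first by exists 1.
case Pa: (P a).
  exists (Num.min (f a) d); first by rewrite lt_min d0 H.
  move=> i; rewrite in_cons => /orP[/eqP ->|iS] Pi; first by rewrite ge_min lexx.
  by rewrite ge_min Hd ?orbT.
exists d => // i; rewrite in_cons => /orP[/eqP ->|iS] Pi; first by rewrite Pa in Pi.
exact: Hd.
Qed.

Definition alpha (d s : R) k := (d * s) ^+ k / k`!%:R.
Definition beta (d s : R) k := if k is k'.+1 then d * alpha d s k' else 0.

Lemma alpha_ge0 d s k : 0 <= d -> 0 <= s -> 0 <= alpha d s k.
Proof.
by move=> d0 s0; rewrite /alpha divr_ge0 // exprn_ge0 // mulr_ge0.
Qed.

Lemma beta_ge0 d s k : 0 <= d -> 0 <= s -> 0 <= beta d s k.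
Proof. by case: k => [|k] d0 s0 //=; rewrite mulr_ge0 // alpha_ge0. Qed.

Lemma beta_eq d s k : k%:R * (d * s) ^+ k.-1 * d / k`!%:R = beta d s k.
Proof.
case: k => [|k]; first by rewrite !mul0r.
rewrite /= /alpha factS natrM.
have h1 : (k.+1%:R : R) != 0 by rewrite pnatr_eq0.
have h2 : (k`!%:R : R) != 0 by rewrite pnatr_eq0 -lt0n fact_gt0.
by field; rewrite h2 addrC natr1 h1.
Qed.

Lemma term_ineq (e ak bk bk1 ik ik1 qk c d C : R) :
  0 < e -> 0 <= ak -> C = - (c + d) -> bk1 = d * ak ->
  [\/ [/\ ik = 1, ik1 = 1 & - c <= qk],
      [/\ ik = 0, ik1 = 1 & d <= qk] |
      [/\ ik = 0, ik1 = 0 & 0 <= qk]] ->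
  e * (bk1 * ik1 - bk * ik) <= e * ak * qk - e * ik * (C * ak + bk).
Proof.
move=> e0 a0 -> -> H.
rewrite -!mulrA -mulrBr; apply: ler_wpM2l; first exact: ltW.
case: H => [[-> -> hq]|[-> -> hq]|[-> -> hq]].
- rewrite -subr_ge0.
  have -> : ak * qk - 1 * (- (c + d) * ak + bk) - (d * (ak * 1) - bk * 1) =
    ak * (qk + c) by ring.
  by rewrite mulr_ge0 //; lra.
- rewrite !(mulr0, mul0r, subr0, mulr1) mulrC.
  exact: ler_wpM2l.
- rewrite !(mulr0, mul0r, subr0, mulr1).
  by rewrite mulr_ge0.
Qed.

End Fin.
Arguments alpha {R}. Arguments beta {R}. Arguments alpha_ge0 {R}. Arguments beta_ge0 {R}. Arguments beta_eq {R}.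

Section Sub.
Variables (R : realType) (X : finType) (Q : (X -> R) -> X -> R).
Hypothesis HQ : lower_rate_op Q.
Variables (A : {set X}) (N : nat) (c d : R).
Hypotheses (hc : 0 <= c) (hd : 0 < d)
 (Hc : forall k y, (k < N)%N -> - c <= Q (indic R (reach_seq Q A k)) y)
 (Hd : forall k y, (k < N)%N -> y \notin reach_seq Q A k ->
        y \in reach_seq Q A k.+1 -> d <= Q (indic R (reach_seq Q A k)) y).

Definition wf s y := \sum_(k < N) (indic R (reach_seq Q A k) y / k`!%:R) *
   (expR (- (c + d) * s) * (d * s) ^+ k).
Definition dwf s y := \sum_(k < N) (indic R (reach_seq Q A k) y / k`!%:R) *
   (- (c + d) * expR (- (c + d) * s) * (d * s) ^+ k +
    expR (- (c + d) * s) * (k%:R * (d * s) ^+ k.-1 * d)).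

Lemma subsol s y : 0 <= s -> dwf s y <= Q (wf s) y.
Proof.
move=> s0.
set C := - (c + d).
set e := expR (C * s).
have e0 : 0 < e := expR_gt0 _.
have Ew : wf s = fun z => \sum_(k < N) (e * alpha d s k) *
    indic R (reach_seq Q A k) z.
  apply: funext => z; apply: eq_bigr => k _; rewrite /alpha /e /C; ring.
have Edw : dwf s y = \sum_(k < N) e * indic R (reach_seq Q A k) y *
    (C * alpha d s k + beta d s k).
  apply: eq_bigr => k _; rewrite -beta_eq /alpha /e /C; ring.
have HQw : \sum_(k < N) (e * alpha d s k) * Q (indic R (reach_seq Q A k)) y <=
    Q (wf s) y.
  rewrite Ew.
  apply: le_trans (@Q_sum R X Q HQ _ _
     (fun (k : 'I_N) z => (e * alpha d s k) * indic R (reach_seq Q A k) z) y).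
  rewrite le_eqVlt; apply/orP; left; apply/eqP; apply: eq_bigr => k _.
  rewrite (@Q_scale R X Q HQ) //.
  by apply: mulr_ge0; [apply: ltW | apply: alpha_ge0; [apply: ltW|]].
pose G k := beta d s k * indic R (reach_seq Q A k) y.
have Htel : \sum_(k < N) e * (G k.+1 - G k) <=
   \sum_(k < N) (e * alpha d s k * Q (indic R (reach_seq Q A k)) y -
     e * indic R (reach_seq Q A k) y * (C * alpha d s k + beta d s k)).
  apply: ler_sum => k _.
  rewrite /G.
  apply: (@term_ineq R e (alpha d s k) (beta d s k) (beta d s k.+1)
     (indic R (reach_seq Q A k) y) (indic R (reach_seq Q A k.+1) y)
     (Q (indic R (reach_seq Q A k)) y) c d C e0 (alpha_ge0 _ _ _ (ltW hd) s0) erefl erefl).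
  have kN := ltn_ord k.
  have [yk|yk] := boolP (y \in reach_seq Q A k).
    have yk1 : y \in reach_seq Q A k.+1.
      by apply: (fintype.subsetP (@reach_sub R X Q A k)).
    by apply: Or31; rewrite /indic yk yk1; split => //; apply: Hc.
  have [yk1|yk1] := boolP (y \in reach_seq Q A k.+1).
    by apply: Or32; rewrite /indic (negbTE yk) yk1; split => //; apply: Hd.
  apply: Or33; rewrite /indic (negbTE yk) (negbTE yk1); split => //.
  apply: (@Q_nonneg R X Q HQ); first exact: indic_ge0.
  by rewrite /indic (negbTE yk).
have Gsum : \sum_(k < N) e * (G k.+1 - G k) = e * (G N - G 0).
  by rewrite -mulr_sumr -(big_mkord xpredT (fun k => G k.+1 - G k)) telescope_sumr.
have G0 : G 0%N = 0 by rewrite /G /= mul0r.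
have GN : 0 <= G N.
  by apply: mulr_ge0; [apply: beta_ge0; [apply: ltW|] | apply: indic_ge0].
move: Htel; rewrite Gsum G0 subr0 sumrB -Edw => Htel.
have : 0 <= e * G N by rewrite mulr_ge0 // ltW.
lra.
Qed.

End Sub.
Arguments wf {R X}. Arguments dwf {R X}.

Section Back.
Variables (R : realType) (X : finType) (Q : (X -> R) -> X -> R)
  (T : R -> (X -> R) -> X -> R).
Hypothesis HQ : lower_rate_op Q.
Hypothesis HT : solves_semigroup_ode Q T.

Lemma reach_pos (A : {set X}) n (t : R) x : 0 < t ->
  x \in reach_seq Q A n -> 0 < T t (indic R A) x.
Proof.
move=> t0 xn.
pose N := n.+1.
have [c hc Hc0] := @fin_lower R ('I_N * X)%type
   (fun p => Q (indic R (reach_seq Q A p.1)) p.2).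
have [d hd Hd0] := @fin_pos R ('I_N * X)%type
   (fun p => (p.2 \notin reach_seq Q A p.1) && (p.2 \in reach_seq Q A p.1.+1))
   (fun p => Q (indic R (reach_seq Q A p.1)) p.2)
   (fun p => (fun H => @reach_new R X Q A p.1 p.2 (andP H).1 (andP H).2)).
have Hc : forall k y, (k < N)%N -> - c <= Q (indic R (reach_seq Q A k)) y.
  by move=> k y kN; exact: (Hc0 (Ordinal kN, y)).
have Hd : forall k y, (k < N)%N -> y \notin reach_seq Q A k ->
    y \in reach_seq Q A k.+1 -> d <= Q (indic R (reach_seq Q A k)) y.
  by move=> k y kN h1 h2; apply: (Hd0 (Ordinal kN, y)); rewrite /= h1 h2.
have Hmp : wf Q A N c d t x - T t (indic R A) x <= 0.
  apply: (@MP R X (fun s z => wf Q A N c d s z - T s (indic R A) z)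
    (fun s z => dwf Q A N c d s z - Q (T s (indic R A)) z) t (ltW t0)).
  - move=> z /=; have [-> _] := HT (indic R A).
    rewrite /wf big_ord_recl /= big1 ?addr0.
      by rewrite !mulr0 expr0 expR0 invr1 !mulr1 subrr.
    by move=> i _; rewrite !mulr0 expr0n /= !mulr0.
  - move=> s s0 st z.
    have H1 := @w_quot R N (- (c + d)) d s
      (fun k => indic R (reach_seq Q A k) z / k`!%:R).
    have [_ H2] := HT (indic R A).
    have HB := cvgB H1 (H2 s s0 z).
    have HB2 := HB (within_filter _ (dnbhs_filter _)).
    rewrite /dwf; apply: (cvg_trans _ HB2).
    apply: near_eq_cvg; apply: nearW => h /=.
    by rewrite /wf opprfctE addrfctE /=; ring.
  - move=> s z s0 st dpos dmax /=.
    have H1 := @subsol R X Q HQ A N c d hd Hc Hd s z s0.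
    have H2 : Q (wf Q A N c d s) z <= Q (T s (indic R A)) z.
      set M := wf Q A N c d s z - T s (indic R A) z.
      rewrite -(@Q_shift R X Q HQ (T s (indic R A)) M z).
      apply: (@Q_locmono R X Q HQ).
        by move=> y; have := dmax y; rewrite /M /=; lra.
      by rewrite /M; ring.
    lra.
have : 0 < wf Q A N c d t x.
  rewrite /wf (bigD1 ord_max) //=.
  have p1 : 0 < indic R (reach_seq Q A n) x / n`!%:R *
      (expR (- (c + d) * t) * (d * t) ^+ n).
    rewrite /indic xn; apply: mulr_gt0; first by rewrite divr_gt0 // ltr0n fact_gt0.
    apply: mulr_gt0; first exact: expR_gt0.
    by apply: exprn_gt0; apply: mulr_gt0.
  have p2 : 0 <= \sum_(i < N | i != ord_max) indic R (reach_seq Q A i) x / i`!%:R *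
      (expR (- (c + d) * t) * (d * t) ^+ i).
    apply: sumr_ge0 => i _; apply: mulr_ge0.
      by apply: divr_ge0; [apply: indic_ge0 | apply: ler0n].
    apply: mulr_ge0; first exact: ltW (expR_gt0 _).
    by apply: exprn_ge0; apply: mulr_ge0; apply: ltW.
  by apply: lt_le_trans p1 _; rewrite lerDl.
lra.
Qed.

End Back.

Local Close Scope classical_set_scope.

Theorem proposition12 (R : realType) (X : finType)
    (Q : (X -> R) -> (X -> R)) (T : R -> (X -> R) -> (X -> R)) :
  lower_rate_op Q ->
  solves_semigroup_ode Q T ->
  forall (t : R), 0 < t -> forall (x : X) (A : {set X}),
    0 < T t (@indic R X A) x <-> lower_reachable Q A x.
Proof.
move=> HQ HT t t0 x A; split.
- move=> pos.
  have ex : exists n, reach_seq Q A n == reach_seq Q A n.+1.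
    by have [n Hn] := @reach_stab R X Q A; exists n; apply/eqP.
  case: (ex_minnP ex) => n /eqP Hn Hmin.
  exists n; split => //.
    move=> m mn E; have := Hmin m (introT eqP E); by rewrite leqNgt mn.
  apply: contraT => xn.
  have := @not_reach_zero R X Q T HQ HT A n t x (ltW t0) Hn xn.
  by rewrite leNgt pos.
- by case=> n [_ _ xn]; exact: (@reach_pos R X Q T HQ HT A n t x t0 xn).
Qed.
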